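(* For all positive integers $m,n,w,d$ with $2w\le m$, $$A(m,n,w,d)\ge\sqrt{\pi wn}\;2^{-\frac{n}{2}(3+\log_2 w)}\,B(mn,nw,d).$$
   Context: $J(m,w)$ denotes the set of binary vectors of length $m$ and Hamming weight $w$. Elements of $J(m,w)^n$ are identified with $m\times n$ binary matrices all of whose columns have weight $w$, with binary Hamming distance. $A(m,n,w,d)$ is the maximum cardinality of a nonempty subset of $J(m,w)^n$ with pairwise Hamming distances at least $2d$. $B(N,W,d)$ is the maximum cardinality of a nonempty subset of $J(N,W)$ with pairwise Hamming distances at least $2d$. Here $\pi$ is the circle constant. *)

(* Defs.v *)
From mathcomp Require Import all_boot.
Set Implicit Arguments.
Unset Strict Implicit.
Unset Printing Implicit Defensive.

Definition bweight (N : nat) (x : {ffun 'I_N -> bool}) : nat := #|[set i | x i]|.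

Definition bdist (N : nat) (x y : {ffun 'I_N -> bool}) : nat :=
  #|[set i | x i != y i]|.

Definition inJ (N W : nat) (x : {ffun 'I_N -> bool}) : bool := bweight x == W.

Definition is_constant_weight_code (N W d : nat) (C : {set {ffun 'I_N -> bool}}) : bool :=
  [&& C != set0,
      [forall x in C, inJ W x] &
      [forall x in C, forall y in C, (x != y) ==> (2 * d <= bdist x y)]].

Definition B (N W d : nat) : nat :=
  \max_(C : {set {ffun 'I_N -> bool}} | is_constant_weight_code W d C) #|C|.

(* Elements of J(m,w)^n as m x n binary matrices (entries indexed by 'I_m * 'I_n),
   all columns of weight w; binary Hamming distance on all m*n entries. *)
Definition mat (m n : nat) := {ffun 'I_m * 'I_n -> bool}.

Definition col_weight (m n : nat) (M : mat m n) (j : 'I_n) : nat :=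
  #|[set i : 'I_m | M (i, j)]|.

Definition inJn (m n w : nat) (M : mat m n) : bool :=
  [forall j : 'I_n, col_weight M j == w].

Definition mdist (m n : nat) (M M' : mat m n) : nat :=
  #|[set ij : 'I_m * 'I_n | M ij != M' ij]|.

Definition is_multi_cw_code (m n w d : nat) (C : {set mat m n}) : bool :=
  [&& C != set0,
      [forall M in C, inJn w M] &
      [forall M in C, forall M' in C, (M != M') ==> (2 * d <= mdist M M')]].

Definition A (m n w d : nat) : nat :=
  \max_(C : {set mat m n} | is_multi_cw_code w d C) #|C|.

(* Main.v *)
Require Import Defs.
From mathcomp Require Import all_boot all_fingroup.
From mathcomp Require Import zify.
From Stdlib Require Import Reals Lra ZArith Lia Ring.
Open Scope R_scope.
Lemma exp_pow_nat (x : R) (k : nat) : exp x ^ k = exp (INR k * x).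
Proof.
elim: k => [|k IH]; first by rewrite /= Rmult_0_l exp_0.
change (exp x ^ k.+1) with (exp x * exp x ^ k).
rewrite IH -exp_plus S_INR; f_equal; ring.
Qed.

Lemma exp1_bound : exp 1 <= (50/49)^50.
Proof.
have h : exp (1/50) <= 50/49.
  have h1 : 1 + (- (1/50)) < exp (- (1/50)) by apply: exp_ineq1; lra.
  rewrite exp_Ropp in h1.
  have hp : 0 < exp (1/50) by apply: exp_pos.
  have h2 : 49/50 * exp (1/50) < / exp (1/50) * exp (1/50).
    apply: Rmult_lt_compat_r => //; lra.
  rewrite Rinv_l in h2; lra.
have -> : exp 1 = exp (1/50) ^ 50.
  rewrite exp_pow_nat; f_equal; simpl; field.
apply: pow_incr; split => //; left; apply: exp_pos.
Qed.

Lemma num_bound : (50/49)^100 * (21/20) <= 8.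
Proof.
have hz : (50 ^ Z.of_nat 100 * 21 <= 8 * 20 * 49 ^ Z.of_nat 100)%Z.
  by apply Z.leb_le; vm_compute.
have hR : 50 ^ 100 * 21 <= 8 * 20 * 49 ^ 100.
  rewrite (pow_IZR 50) (pow_IZR 49) -(mult_IZR _ 21) -(mult_IZR 8 20) -mult_IZR.
  by apply: IZR_le.
rewrite /Rdiv Rpow_mult_distr pow_inv.
have hb : 0 < 49 ^ 100 by apply: pow_lt; lra.
move: hR hb.
generalize (50 ^ 100) (49 ^ 100) => a b hR hb.
apply: (Rmult_le_reg_r b) => //.
have -> : a * / b * (21 * / 20) * b = a * 21 / 20 by field; lra.
lra.
Qed.

Lemma expn_pow (a b : nat) : expn a b = Nat.pow a b.
Proof. elim: b => [|b IH] //=; by rewrite expnS IH. Qed.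

Lemma K_R {n : nat} : (20 <= n)%nat -> (1 + 1/INR n)^(2*n+1) <= 8.
Proof.
move=> hn.
have h20 : 20 <= INR n.
  have -> : 20 = INR 20 by rewrite INR_IZR_INZ.
  by apply: le_INR; apply/leP.
have hx : 0 < 1/INR n by apply: Rdiv_lt_0_compat; lra.
have hx2 : 1/INR n <= 1/20.
  apply: (Rmult_le_reg_r (INR n * 20)); first lra.
  have -> : 1 / INR n * (INR n * 20) = 20 by field; lra.
  have -> : 1 / 20 * (INR n * 20) = INR n by field.
  lra.
have he : (1 + 1/INR n)^n <= exp 1.
  have -> : exp 1 = exp (1/INR n) ^ n.
    rewrite exp_pow_nat; f_equal; field; lra.
  apply: pow_incr; split; first lra.
  left; apply: exp_ineq1; lra.
have -> : (2*n+1)%nat = (n + n + 1)%nat by rewrite mul2n -addnn.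
rewrite !pow_add pow_1.
have h0 : 0 <= (1 + 1/INR n)^n by apply: pow_le; lra.
have he2 : exp 1 <= (50/49)^50 := exp1_bound.
have hp : (50/49)^100 = (50/49)^50 * (50/49)^50 by rewrite -pow_add.
have := num_bound.
have : (1 + 1 / INR n) ^ n * (1 + 1 / INR n) ^ n <= (50/49)^50 * (50/49)^50.
  apply: Rmult_le_compat; lra.
nra.
Qed.

Lemma K_small (n : nat) : (0 < n)%nat -> (n < 20)%nat ->
  (Z.of_nat n.+1 ^ Z.of_nat ((2*n+1)%nat) <= Z.of_nat 8 * Z.of_nat n ^ Z.of_nat ((2*n+1)%nat))%Z.
Proof.
case: n => [//|n] _.
do 19 (case: n => [|n]; [move=> _; apply Z.leb_le; vm_compute; reflexivity|]).
by [].
Qed.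

Lemma K_nat (n : nat) : (0 < n)%nat -> (expn n.+1 (2*n+1) <= 8 * expn n (2*n+1))%nat.
Proof.
move=> hn; apply/leP; apply: INR_le.
rewrite mult_INR !expn_pow !pow_INR.
case: (ltnP n 20) => h20.
  rewrite !INR_IZR_INZ !pow_IZR -mult_IZR; apply: IZR_le.
  exact: K_small.
have hpos : 0 < INR n by apply: lt_0_INR; apply/ltP.
have -> : INR n.+1 = INR n * (1 + 1 / INR n) by rewrite S_INR; field; lra.
rewrite Rpow_mult_distr Rmult_comm.
have hk := K_R h20.
have : 0 <= INR n ^ (2*n+1) by apply: pow_le; lra.
have -> : INR 8 = 8 by rewrite INR_IZR_INZ.
nra.
Qed.

Section S.
Import ssrnat.
Local Open Scope nat_scope.

Lemma c_base n : 0 < n -> 4 * n * n ^ (2 * n) <= 8 ^ n * (n`!) ^ 2.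
Proof.
elim: n => [//|n IH] _.
case: n IH => [|k] IH; first by [].
have IH' := IH isT.
have hK := K_nat k.+1 isT.
rewrite factS.
have e1 : k.+2 ^ (2 * k.+2) = k.+2 * k.+2 ^ (2*k.+1+1).
  by rewrite -expnS; congr expn; lia.
have e2 : k.+1 ^ (2*k.+1+1) = k.+1 * k.+1 ^ (2*k.+1).
  by rewrite addn1 expnS.
rewrite e1 expnS expnMn.
rewrite e2 in hK.
move: IH' hK.
set X := k.+2 ^ _. set Z := k.+1 ^ _. set F := k.+1`! ^ 2. set E := 8 ^ k.+1.
move=> IH' hK.
have h1 : 4 * k.+2 * (k.+2 * X) <= 4 * k.+2 * (k.+2 * (8 * (k.+1 * Z))).
  by rewrite !leq_mul2l hK !orbT.
apply: (leq_trans h1).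
have h2 : 4 * k.+2 * (k.+2 * (8 * (k.+1 * Z))) = 8 * (k.+2 ^ 2) * (4 * k.+1 * Z) by rewrite expnS expn1; lia.
rewrite h2.
have h3 : 8 * E * (k.+2 ^ 2 * F) = 8 * (k.+2 ^ 2) * (E * F) by lia.
by rewrite h3 leq_mul2l IH' orbT.
Qed.

Lemma pair_ffact a n : ((a+n)*(a+1))^n <= ((a+n)^_n)^2.
Proof.
rewrite ffact_prod -mulnn {2}(reindex_inj rev_ord_inj) -big_split /=.
have -> : ((a+n)*(a+1))^n = \prod_(i < n) ((a+n)*(a+1)).
  by rewrite prod_nat_const card_ord.
apply: leq_prod => i _; rewrite /=.
have := ltn_ord i; nia.
Qed.

Lemma bern a k : (a + k.+1) * a ^ k <= a.+1 ^ k.+1.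
Proof.
elim: k => [|k IH]; first by rewrite expn0 expn1 muln1 addn1.
rewrite expnS [a.+1 ^ k.+2]expnS.
have h : (a + k.+2) * (a * a ^ k) <= a.+1 * ((a + k.+1) * a ^ k) by nia.
apply: (leq_trans h); by rewrite leq_mul2l IH orbT.
Qed.

Lemma c_step n v : 0 < n -> 0 < v ->
  4 * v * n * n ^ (2 * n * v) * (v`!) ^ (2 * n) <= (8 * v) ^ n * ((n * v)`!) ^ 2 ->
  4 * v.+1 * n * n ^ (2 * n * v.+1) * (v.+1`!) ^ (2 * n) <= (8 * v.+1) ^ n * ((n * v.+1)`!) ^ 2.
Proof.
case: n => [//|k] _ hv hG.
set n := k.+1 in hG *.
set a := n * v.
have ea : n * v.+1 = a + n by rewrite mulnS addnC.
have hf : (a + n)`! = (a + n)^_n * a`!.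
  by rewrite -(ffact_fact (leq_addl a n)) addnK.
set P := (a + n)^_n in hf.
have h2 := pair_ffact a n.
have h1 := bern a k.
rewrite -/P in h2.
clearbody P.
have eA : (a + n) ^ n = n ^ n * v.+1 ^ n by rewrite -ea expnMn.
have eB : a ^ k = n ^ k * v ^ k by rewrite expnMn.
have hP : n ^ n * v.+1 ^ n * (n * v.+1 * (n ^ k * v ^ k)) <= P ^ 2.
  apply: leq_trans h2; rewrite expnMn -eA -eB ea.
  rewrite leq_mul2l; apply/orP; right; rewrite addn1; exact: h1.
have e1 : n ^ (2 * n * v.+1) = n ^ (2 * n * v) * (n ^ n * (n * n ^ k)).
  rewrite -expnS -expnD -expnD.
  have -> : 2 * n * v.+1 = 2 * n * v + (n + k.+1) by rewrite /n; nia.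
  done.
have e2 : (v.+1`!) ^ (2 * n) = v.+1 ^ n * v.+1 ^ n * (v`!) ^ (2 * n).
  by rewrite factS expnMn -expnD addnn -mul2n.
rewrite e1 e2 ea hf expnMn [(P * _) ^ 2]expnMn.
move: hG hP; rewrite [(8 * v)^n]expnMn.
set N0 := n ^ (2 * n * v). set V := v`! ^ (2 * n). set A := a`!.
set nn := n ^ n. set nk := n ^ k. set vv := v.+1 ^ n. set vk := v ^ k.
set E := 8 ^ n. set P2 := P ^ 2. set A2 := A ^ 2.
have ev : v ^ n = v * vk by rewrite expnS.
rewrite ev.
move=> hG hP.
have hvn : 0 < v * vk by rewrite muln_gt0 hv expn_gt0 hv.
rewrite -(leq_pmul2r hvn).
have hQ : v.+1 * (nn * (n * nk)) * (vv * vv) * vk <= vv * P2.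
  apply: leq_trans (_ : vv * (nn * vv * (n * v.+1 * (nk * vk))) <= _).
    apply: eq_leq; rewrite -!multE; ring.
  by rewrite leq_mul2l hP orbT.
have h := leq_mul hG hQ.
apply: (leq_trans _ (leq_trans h _)).
  apply: eq_leq; rewrite -!multE; ring.
apply: eq_leq; rewrite -!multE; ring.
Qed.

Lemma c_all n w : 0 < n -> 0 < w ->
  4 * w * n * n ^ (2 * n * w) * (w`!) ^ (2 * n) <= (8 * w) ^ n * ((n * w)`!) ^ 2.
Proof.
move=> hn; elim: w => [//|w IH] _.
case: w IH => [|w] IH.
  rewrite !muln1 (_ : 1`! = 1) // exp1n muln1.

  exact: c_base.
by apply: c_step => //; apply: IH.
Qed.

Lemma ffact_split a b c : a ^_ (b + c) = a ^_ b * (a - b) ^_ c.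
Proof.
elim: c => [|c IH]; first by rewrite addn0 ffactn0 muln1.
by rewrite addnS !ffactnSr IH subnDA mulnA.
Qed.

Lemma ffact_le_exp a c : a ^_ c <= a ^ c.
Proof.
elim: c => [|c IH]; first by rewrite ffactn0 expn0.
rewrite ffactnSr expnSr; apply: leq_mul IH (leq_subr _ _).
Qed.

Lemma ffact_block m n w : (m * n) ^_ (n * w) <= n ^ (n * w) * (m ^_ w) ^ n.
Proof.
elim: w => [|w IH]; first by rewrite muln0 ffactn0 expn0 ffactn0 exp1n.
rewrite mulnS addnC ffact_split ffactnSr expnMn expnD mulnA.
apply: (@leq_trans ((n ^ (n * w) * (m ^_ w) ^ n) * (n * (m - w)) ^ n)).
  apply: leq_mul IH _.
  by rewrite mulnBr [m * n]mulnC; apply: ffact_le_exp.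
apply: eq_leq; rewrite expnMn -!multE; ring.
Qed.

Lemma binom_block m n w : 'C(m * n, n * w) * (n * w)`! <= n ^ (n * w) * ('C(m, w) * w`!) ^ n.
Proof. by rewrite !bin_ffact; apply: ffact_block. Qed.
End S.

Section Comb.
Import ssrnat.
Local Open Scope nat_scope.

Lemma card_bij {aT rT : finType} {g : aT -> rT} (P : pred rT) :
  bijective g -> #|[set p | P (g p)]| = #|[set k | P k]|.
Proof.
move=> gb; have gi := bij_inj gb.
case: gb => h gh hg.
rewrite -(card_imset _ gi); apply: eq_card => k.
apply/imsetP/idP.
  by case=> p; rewrite !inE => hp ->.
by rewrite inE => hk; exists (h k); rewrite ?inE hg.
Qed.

Lemma card_sep (T : finType) (A : {set T}) (P : pred T) :
  #|[set x in A | P x]| = \sum_(x in A) (P x : nat).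
Proof.
rewrite -sum1_card [LHS]big_mkcond [RHS]big_mkcond; apply: eq_bigr => x _.
by rewrite !inE; case: (x \in A); case: (P x).
Qed.

Lemma card_J N W : #|[set x : {ffun 'I_N -> bool} | inJ W x]| = 'C(N, W).
Proof.
have inj : injective (fun x : {ffun 'I_N -> bool} => [set i | x i]).
  move=> x y /setP h; apply/ffunP => i; move: (h i); by rewrite !inE.
rewrite -(card_imset _ inj).
transitivity #|[set A : {set 'I_N} | #|A| == W]|; last by rewrite card_draws card_ord.
apply: eq_card => A; rewrite inE; apply/imsetP/idP.
  by case=> x; rewrite inE /inJ /bweight => /eqP <- ->.
move=> hA; exists [ffun i => i \in A]; last by apply/setP => i; rewrite inE ffunE.
rewrite inE /inJ /bweight.
have -> : [set i | [ffun i => i \in A] i] = A by apply/setP => i; rewrite inE ffunE.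
exact: hA.
Qed.

Lemma card_S m n w : #|[set M : {ffun 'I_m * 'I_n -> bool} | inJn w M]| = 'C(m, w) ^ n.
Proof.
pose cu (M : {ffun 'I_m * 'I_n -> bool}) : {ffun 'I_n -> {ffun 'I_m -> bool}} := [ffun j => [ffun i => M (i, j)]].
have inj : injective cu.
  move=> M M' h; apply/ffunP => -[i j].
  by have := congr1 (fun f : {ffun 'I_n -> {ffun 'I_m -> bool}} => f j i) h; rewrite /cu !ffunE.
rewrite -(card_imset _ inj).
transitivity #|@ffun_on 'I_n [set x : {ffun 'I_m -> bool} | inJ w x]|; last first.
  by rewrite card_ffun_on card_J card_ord.
apply: eq_card => f; apply/imsetP/ffun_onP.
  case=> M; rewrite inE /inJn => /forallP hM -> j.
  rewrite inE /inJ /bweight /cu ffunE.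
  have := hM j; rewrite /col_weight.
  have -> : [set i | [ffun i => M (i, j)] i] = [set i | M (i, j)] by apply/setP => i; rewrite !inE ffunE.
  done.
move=> hf; exists [ffun p => f p.2 p.1].
  rewrite inE /inJn; apply/forallP => j; rewrite /col_weight.
  have := hf j; rewrite inE /inJ /bweight.
  have -> : [set i | [ffun p => f p.2 p.1] (i, j)] = [set i | f j i] by apply/setP => i; rewrite !inE ffunE.
  done.
by apply/ffunP => j; apply/ffunP => i; rewrite /cu !ffunE.
Qed.

Lemma count_tuple N (y : {ffun 'I_N -> bool}) (a : pred bool) :
  count a [tuple y i | i < N] = #|[set i | a (y i)]|.
Proof.
rewrite -sum1_count -sum1dep_card.
rewrite /= big_map.
by rewrite big_enum_cond.
Qed.

Lemma trans_perm N (x y : {ffun 'I_N -> bool}) :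
  bweight x = bweight y -> exists t : {perm 'I_N}, forall i, y i = x (t i).
Proof.
move=> h.
have hc : forall z : {ffun 'I_N -> bool}, count (fun b : bool => b) [tuple z i | i < N] = bweight z.
  by move=> z; rewrite count_tuple.
have hs : forall z : {ffun 'I_N -> bool}, size [tuple z i | i < N] = N.
  by move=> z; rewrite size_tuple.
have hn : forall z : {ffun 'I_N -> bool}, count negb [tuple z i | i < N] = N - bweight z.
  move=> z; have := count_predC (fun b : bool => b) [tuple z i | i < N].
  rewrite (hc z) (hs z) => H.
  change (count negb _) with (count (predC (fun b : bool => b)) [tuple z i | i < N]); lia.
have hp : perm_eq [tuple y i | i < N] [tuple x i | i < N].
  apply/seq.permP => a.
  case ha1: (a true); case ha0: (a false).
  - rewrite (eq_count (a2 := predT)); last by case.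
    by rewrite [RHS](eq_count (a2 := predT)) ?count_predT ?hs //; case.
  - rewrite (eq_count (a2 := fun b : bool => b)); last by case.
    by rewrite [RHS](eq_count (a2 := fun b : bool => b)) ?hc ?h //; case.
  - rewrite (eq_count (a2 := negb)); last by case.
    by rewrite [RHS](eq_count (a2 := negb)) ?hn ?h //; case.
  - rewrite (eq_count (a2 := pred0)); last by case.
    by rewrite [RHS](eq_count (a2 := pred0)) ?count_pred0 //; case.
case/tuple_permP: hp => p hp.
exists p => i.
have := congr1 (fun s => nth false s i) hp.
by rewrite /= !nth_mktuple tnth_mktuple.
Qed.
End Comb.

Section Main.
Import ssrnat.
Local Open Scope nat_scope.
Variables m n w d : nat.

Lemma cardMN : #|{: 'I_m * 'I_n}| = m * n.
Proof. by rewrite card_prod !card_ord. Qed.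

Definition Phi (p : 'I_m * 'I_n) : 'I_(m * n) := cast_ord cardMN (enum_rank p).
Definition Psi (k : 'I_(m * n)) : 'I_m * 'I_n := enum_val (cast_ord (esym cardMN) k).
Lemma PhiK : cancel Phi Psi.
Proof. by move=> p; rewrite /Phi /Psi cast_ordK enum_rankK. Qed.
Lemma PsiK : cancel Psi Phi.
Proof. by move=> k; rewrite /Phi /Psi enum_valK cast_ordKV. Qed.

Definition Tm (s : {perm 'I_(m * n)}) (x : {ffun 'I_(m * n) -> bool}) : {ffun 'I_m * 'I_n -> bool} :=
  [ffun p => x (s (Phi p))].
Definition Ti (s : {perm 'I_(m * n)}) (M : {ffun 'I_m * 'I_n -> bool}) : {ffun 'I_(m * n) -> bool} :=
  [ffun k => M (Psi ((s^-1)%g k))].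

Lemma TmK s : cancel (Tm s) (Ti s).
Proof. by move=> x; apply/ffunP => k; rewrite /Ti /Tm !ffunE PsiK permKV. Qed.
Lemma TiK s : cancel (Ti s) (Tm s).
Proof. by move=> M; apply/ffunP => p; rewrite /Ti /Tm !ffunE permK PhiK. Qed.
Lemma Tm_bij s : bijective (Tm s).
Proof. by exists (Ti s); [apply: TmK | apply: TiK]. Qed.
Lemma g_bij (s : {perm 'I_(m * n)}) : bijective (fun p => s (Phi p)).
Proof.
exists (fun k => Psi ((s^-1)%g k)) => [p|k]; first by rewrite permK PhiK.
by rewrite PsiK permKV.
Qed.

Lemma mdist_Tm s x y : mdist (Tm s x) (Tm s y) = bdist x y.
Proof.
rewrite /mdist /bdist.
have -> : [set ij | Tm s x ij != Tm s y ij] = [set p | (fun k => x k != y k) (s (Phi p))].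
  by apply/setP => p; rewrite !inE /Tm !ffunE.
exact: (card_bij (fun k => x k != y k) (g_bij s)).
Qed.

Lemma weight_sum {M : {ffun 'I_m * 'I_n -> bool}} :
  inJn w M -> #|[set p | M p]| = n * w.
Proof.
move=> /forallP hM.
rewrite -sum1dep_card big_mkcond /=.
have -> : \sum_(p : 'I_m * 'I_n) (if M p then 1 else 0) =
          \sum_(i : 'I_m) \sum_(j : 'I_n) (if M (i, j) then 1 else 0).
  by rewrite pair_big /=; apply: eq_bigr => -[i j].
rewrite exchange_big /=.
have -> : \sum_(j : 'I_n) \sum_(i : 'I_m) (if M (i, j) then 1 else 0) = \sum_(j : 'I_n) w.
  apply: eq_bigr => j _; have := hM j; rewrite /col_weight => /eqP <-.
  by rewrite -sum1dep_card [RHS]big_mkcond.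
by rewrite sum_nat_const card_ord.
Qed.

Lemma inJ_of_Tm s x : inJn w (Tm s x) -> inJ (n * w) x.
Proof.
move=> h; rewrite /inJ /bweight -(weight_sum h).
rewrite -(card_bij (fun k => x k) (g_bij s)).
by apply/eqP; apply: eq_card => p; rewrite !inE /Tm ffunE.
Qed.

Definition cnt (x : {ffun 'I_(m * n) -> bool}) := #|[set s : {perm 'I_(m * n)} | inJn w (Tm s x)]|.

Lemma cnt_eq x y : inJ (n * w) x -> inJ (n * w) y -> cnt y = cnt x.
Proof.
rewrite /inJ => /eqP hx /eqP hy.
have [t ht] := @trans_perm _ x y (etrans hx (esym hy)).
have eT : forall s, Tm s y = Tm (s * t)%g x.
  by move=> s; apply/ffunP => p; rewrite /Tm !ffunE ht permM.
rewrite /cnt.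
have -> : [set s : {perm 'I_(m * n)} | inJn w (Tm s y)] = [set s | (fun u => inJn w (Tm u x)) ((s * t)%g)].
  by apply/setP => s; rewrite !inE eT.
have gb : bijective (fun u : {perm 'I_(m * n)} => (u * t)%g).
  by exists (fun u => (u * t^-1)%g) => u; rewrite ?mulgK ?mulgKV.
exact: (card_bij (fun u => inJn w (Tm u x)) gb).
Qed.

Lemma sum_cnt :
  \sum_(x in [set x : {ffun 'I_(m * n) -> bool} | inJ (n * w) x]) cnt x =
  (m * n)`! * #|[set M : {ffun 'I_m * 'I_n -> bool} | inJn w M]|.
Proof.
rewrite /cnt.
under eq_bigr => x _ do rewrite -sum1dep_card big_mkcond /=.
rewrite exchange_big /=.
rewrite -card_Sn -sum_nat_const.
apply: eq_bigr => s _.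
transitivity #|[set x in [set x : {ffun 'I_(m * n) -> bool} | inJ (n * w) x] | inJn w (Tm s x)]|.
  by rewrite card_sep.
have -> : [set x in [set x : {ffun 'I_(m * n) -> bool} | inJ (n * w) x] | inJn w (Tm s x)] =
          [set x | (fun M => inJn w M) (Tm s x)].
  apply/setP => x; rewrite !inE; apply/andP/idP => [[]//|h]; split=> //.
  exact: (@inJ_of_Tm s x h).
rewrite (card_bij (fun M => inJn w M) (Tm_bij s)).
done.
Qed.

Lemma code_bound (C : {set {ffun 'I_(m * n) -> bool}}) :
  is_constant_weight_code (n * w) d C ->
  #|C| * #|[set M : {ffun 'I_m * 'I_n -> bool} | inJn w M]| <=
  A m n w d * #|[set x : {ffun 'I_(m * n) -> bool} | inJ (n * w) x]|.
Proof.
case/and3P => hne /forallP hW /forallP hD.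
case/set0Pn: hne => x0 hx0.
have hx0J : inJ (n * w) x0 := implyP (hW x0) hx0.
set c0 := cnt x0.
set S := [set M : {ffun 'I_m * 'I_n -> bool} | inJn w M].
set J := [set x : {ffun 'I_(m * n) -> bool} | inJ (n * w) x].
have h1 : \sum_(x in J) cnt x = #|J| * c0.
  rewrite -sum_nat_const; apply: eq_bigr => x; rewrite inE => hx.
  exact: cnt_eq.
have h2 : \sum_(x in C) cnt x = #|C| * c0.
  rewrite -sum_nat_const; apply: eq_bigr => x hx.
  exact: (@cnt_eq x0 x hx0J (implyP (hW x) hx)).
have h3 : \sum_(x in C) cnt x =
    \sum_(s : {perm 'I_(m * n)}) #|[set x in C | inJn w (Tm s x)]|.
  under eq_bigr => x _ do rewrite /cnt -sum1dep_card big_mkcond /=.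
  rewrite exchange_big /=; apply: eq_bigr => s _.
  by rewrite card_sep.
have h4 : forall s : {perm 'I_(m * n)}, #|[set x in C | inJn w (Tm s x)]| <= A m n w d.
  move=> s; set D := [set x in C | inJn w (Tm s x)].
  rewrite -(card_imset _ (bij_inj (Tm_bij s))).
  set Cs := [set Tm s x | x in D].
  case: (boolP (Cs == set0)) => [/eqP -> | hCs]; first by rewrite cards0.
  rewrite /A; apply: (@leq_bigmax_cond _ _ (fun C : {set mat m n} => #|C|) Cs).
  apply/and3P; split => //.
    apply/forallP => M; apply/implyP => /imsetP [x]; rewrite inE => /andP [_ hx] ->.
    exact: hx.
  apply/forallP => M; apply/implyP => /imsetP [x]; rewrite inE => /andP [hxC _] ->.
  apply/forallP => M'; apply/implyP => /imsetP [y]; rewrite inE => /andP [hyC _] ->.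
  apply/implyP => hne; rewrite mdist_Tm.
  have hxy : x != y by apply: contraNneq hne => ->.
  by have := implyP (forallP (implyP (hD x) hxC) y) hyC; move/implyP; apply.
have h5 : #|C| * c0 <= (m * n)`! * A m n w d.
  rewrite -h2 h3 -card_Sn -sum_nat_const; apply: leq_sum => s _; exact: h4.
have h6 : #|J| * c0 = (m * n)`! * #|S| by rewrite -h1 sum_cnt.
have hf : 0 < (m * n)`! by apply: fact_gt0.
rewrite -(leq_pmul2l hf).
have -> : (m * n)`! * (#|C| * #|S|) = #|J| * (#|C| * c0).
  by rewrite mulnCA -h6 mulnCA.
have -> : (m * n)`! * (A m n w d * #|J|) = #|J| * ((m * n)`! * A m n w d).
  by move: ((m * n)`!) (A m n w d) (#|J|) => a b c; rewrite -!multE; ring.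
by rewrite leq_mul2l h5 orbT.
Qed.

Lemma B_bound :
  B (m * n) (n * w) d * #|[set M : {ffun 'I_m * 'I_n -> bool} | inJn w M]| <=
  A m n w d * #|[set x : {ffun 'I_(m * n) -> bool} | inJ (n * w) x]|.
Proof.
rewrite /B.
case: (pickP (fun C : {set {ffun 'I_(m * n) -> bool}} => is_constant_weight_code (n * w) d C)) => [C0 hC0 | h0].
  have hpos : 0 < #|(fun C : {set {ffun 'I_(m * n) -> bool}} => is_constant_weight_code (n * w) d C)|.
    by apply/card_gt0P; exists C0.
  have [C1 hC1 ->] := eq_bigmax_cond (fun C : {set {ffun 'I_(m * n) -> bool}} => #|C|) hpos.
  exact: code_bound.
by rewrite big_pred0.
Qed.
End Main.

Section Fin.
Import ssrnat.
Local Open Scope nat_scope.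
Lemma final_nat m n w : 0 < n -> 0 < w ->
  4 * w * n * 'C(m * n, n * w) ^ 2 <= (8 * w) ^ n * ('C(m, w) ^ n) ^ 2.
Proof.
move=> hn hw.
have hb := binom_block m n w.
have hc := c_all n w hn hw.
have hF : 0 < ((n * w)`!) ^ 2 by rewrite expn_gt0 fact_gt0.
rewrite -(leq_pmul2r hF).
have e1 : n ^ (2 * n * w) = (n ^ (n * w)) ^ 2.
  by rewrite -expnM; have -> : n * w * 2 = 2 * n * w by lia.
have e2 : (w`!) ^ (2 * n) = ((w`!) ^ n) ^ 2.
  by rewrite -expnM; have -> : n * 2 = 2 * n by lia.
rewrite e1 e2 in hc.
move: hb hc.
set c := 'C(m * n, n * w). set F := (n * w)`!. set b := 'C(m, w). set W := w`!.
set X := n ^ (n * w). set E := (8 * w) ^ n.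
move=> hb hc.
apply: (@leq_trans (4 * w * n * (X * (b * W) ^ n) ^ 2)).
  rewrite -mulnA -expnMn leq_mul2l; apply/orP; right.
  by rewrite leq_exp2r.
rewrite expnMn expnMn expnMn.
apply: (@leq_trans ((4 * w * n * X ^ 2 * (W ^ n) ^ 2) * (b ^ n) ^ 2)).
  apply: eq_leq; clear hb hc; move: (X ^ 2) ((b ^ n) ^ 2) ((W ^ n) ^ 2) => p q r.
  by rewrite -!multE; ring.
apply: (@leq_trans ((E * F ^ 2) * (b ^ n) ^ 2)).
  by apply: leq_mul hc (leqnn _).
apply: eq_leq; clear hb hc; move: E (F ^ 2) ((b ^ n) ^ 2) => p q r.
by rewrite -!multE; ring.
Qed.
End Fin.

Theorem corollary2 (m n w d : nat) :
  (0 < m)%nat -> (0 < n)%nat -> (0 < w)%nat -> (0 < d)%nat -> (2 * w <= m)%nat ->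
  INR (A m n w d) >=
    sqrt (PI * INR w * INR n)
    * Rpower 2 (- (INR n / 2) * (3 + ln (INR w) / ln 2))
    * INR (B (m * n) (n * w) d).
Proof.
move=> hm hn hw hd h2w.
have hwm : (w <= m)%nat by lia.
have hBA := B_bound m n w d.
rewrite card_S card_J in hBA.
have hF := final_nat m n w hn hw.
have hc : (0 < 'C(m * n, n * w))%nat.
  by rewrite bin_gt0 [(m * n)%nat]mulnC leq_mul2l hwm orbT.
move: hBA hF hc.
set bN := expn 'C(m, w) n.
set cN := 'C(m * n, n * w).
set AN := A m n w d.
set BN := B (m * n) (n * w) d.
move=> hBA hF hc.
have hBA' : INR BN * INR bN <= INR AN * INR cN.
  by rewrite -!mult_INR; apply: le_INR; apply/leP.
have hF' : 4 * INR w * INR n * INR cN ^ 2 <= (8 * INR w) ^ n * INR bN ^ 2.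
  have := le_INR _ _ (leP hF).
  rewrite !mult_INR !expn_pow !pow_INR mult_INR.
  have -> : INR 4 = 4 by rewrite INR_IZR_INZ.
  have -> : INR 8 = 8 by rewrite INR_IZR_INZ.
  by move=> H; simpl; lra.
have hcpos : 0 < INR cN by apply: lt_0_INR; apply/ltP.
have hwpos : 0 < INR w by apply: lt_0_INR; apply/ltP.
have hnpos : 0 < INR n by apply: lt_0_INR; apply/ltP.
have hln2 : 0 < ln 2 by rewrite -ln_1; apply: ln_increasing; lra.
set E := Rpower 2 _.
have hEpos : 0 < E by apply: exp_pos.
have hK : 0 < (8 * INR w) ^ n by apply: pow_lt; lra.
have hEK : E * E * (8 * INR w) ^ n = 1.
  have -> : (8 * INR w) ^ n = exp (INR n * (3 * ln 2 + ln (INR w))).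
    rewrite -[LHS]exp_ln; last exact: hK.
    rewrite ln_pow; last lra.
    rewrite ln_mult; [|lra|lra].
    have -> : (8 = 2 ^ 3)%R by simpl; ring.
    by rewrite ln_pow; [simpl; f_equal; ring | lra].
  rewrite /E /Rpower -!exp_plus -exp_0; f_equal; field; lra.
set q := sqrt (PI * INR w * INR n).
have hq : 0 <= q by apply: sqrt_pos.
have hq2 : q * q = PI * INR w * INR n.
  rewrite /q sqrt_sqrt //.
  have hpi := PI_RGT_0.
  apply: Rmult_le_pos; [apply: Rmult_le_pos|]; lra.
have hPI := PI_4.
have hkey : q * E * INR cN <= INR bN.
  apply: Rsqr_incr_0_var; last by apply: pos_INR.
  rewrite /Rsqr.
  have -> : q * E * INR cN * (q * E * INR cN) = (q * q) * (E * E) * (INR cN * INR cN) by ring.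
  rewrite hq2.
  have hEE : 0 < E * E by nra.
  have h1 : PI * INR w * INR n * (E * E) * (INR cN * INR cN) <=
            4 * INR w * INR n * INR cN ^ 2 * (E * E).
    have : 0 <= INR w * INR n * (E * E) * (INR cN * INR cN).
      apply: Rmult_le_pos; [|nra]; apply: Rmult_le_pos; [|lra]; nra.
    simpl; nra.
  apply: (Rle_trans _ _ _ h1).
  have h2 : 4 * INR w * INR n * INR cN ^ 2 * (E * E) <= (8 * INR w) ^ n * INR bN ^ 2 * (E * E).
    by apply: Rmult_le_compat_r; lra.
  apply: (Rle_trans _ _ _ h2).
  have -> : (8 * INR w) ^ n * INR bN ^ 2 * (E * E) = (E * E * (8 * INR w) ^ n) * (INR bN * INR bN) by simpl; ring.
  rewrite hEK; lra.
apply: Rle_ge.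
have hB0 : 0 <= INR BN by apply: pos_INR.
apply: (Rmult_le_reg_r (INR cN)) => //.
have : q * E * INR cN * INR BN <= INR bN * INR BN by apply: Rmult_le_compat_r.
nra.
Qed.
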